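(* For $\tau$ in the upper half-plane, $\mathfrak{p}^2(\tau)\mathfrak{p}^2(2\tau)+\mathfrak{p}^2(\tau)-2\mathfrak{p}(2\tau)=0$.
   Context: $q=e^{2\pi i\tau}$, $q^r:=e^{2\pi i r\tau}$, and $\mathfrak{p}(\tau)=2q^{1/16}\prod_{n\ge1}\left(\frac{1+q^{n/2}}{1+q^{n/2-1/4}}\right)^2$ (equivalently $\mathfrak{f}_2(\tau/2)^2/\mathfrak{f}(\tau/2)^2$ with Weber–Schläfli functions $\mathfrak{f},\mathfrak{f}_2$). *)

(* Defs.v *)
From Stdlib Require Import Reals.
From Coquelicot Require Export Coquelicot.
Open Scope R_scope.

Definition cexp (z : C) : C :=
  (exp (Re z) * cos (Im z), exp (Re z) * sin (Im z)).

Definition qpow (r : R) (tau : C) : C :=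
  cexp (Cmult (RtoC (2 * PI * r)) (Cmult Ci tau)).

Definition pfactor (tau : C) (n : nat) : C :=
  let a := Cdiv (Cplus 1 (qpow (INR n / 2) tau))
                (Cplus 1 (qpow (INR n / 2 - 1/4) tau)) in
  Cmult a a.

Fixpoint ppartial (tau : C) (N : nat) : C :=
  match N with
  | O => 1%C
  | S M => Cmult (ppartial tau M) (pfactor tau (S M))
  end.

Definition pprod (tau : C) : C :=
  @lim C_CompleteNormedModule (filtermap (ppartial tau) eventually).

Definition pfrak (tau : C) : C :=
  Cmult (Cmult (RtoC 2) (qpow (1/16) tau)) (pprod tau).

(* Main.v *)
Require Import Defs.
From Stdlib Require Import Reals.
From Coquelicot Require Import Coquelicot.
From Stdlib Require Import Lra Lia.
Open Scope C_scope.

Implicit Types f g u v : nat -> C.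

Fixpoint csum (f : nat -> C) (n : nat) : C :=
  match n with O => 0 | S m => csum f m + f m end.
Fixpoint cprod (f : nat -> C) (n : nat) : C :=
  match n with O => 1 | S m => cprod f m * f m end.

Lemma csum_ext f g n : (forall k, (k < n)%nat -> f k = g k) -> csum f n = csum g n.
Proof. induction n; simpl; intros; auto. rewrite IHn by (intros; apply H; lia). rewrite H by lia. auto. Qed.
Lemma cprod_ext f g n : (forall k, (k < n)%nat -> f k = g k) -> cprod f n = cprod g n.
Proof. induction n; simpl; intros; auto. rewrite IHn by (intros; apply H; lia). rewrite H by lia. auto. Qed.
Lemma csum_split f a b : csum f (a + b) = csum f a + csum (fun i => f (a + i)%nat) b.
Proof. induction b; simpl. rewrite Nat.add_0_r. ring. rewrite Nat.add_succ_r; simpl. rewrite IHb. ring. Qed.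
Lemma cprod_split f a b : cprod f (a + b) = cprod f a * cprod (fun i => f (a + i)%nat) b.
Proof. induction b; simpl. rewrite Nat.add_0_r. ring. rewrite Nat.add_succ_r; simpl. rewrite IHb. ring. Qed.
Lemma csum_rev f n : csum f n = csum (fun i => f (n - 1 - i)%nat) n.
Proof. induction n. auto. change (csum f (S n)) with (csum f n + f n).
  replace (S n) with (1 + n)%nat by lia. rewrite csum_split. simpl.
  rewrite IHn. rewrite Cplus_0_l. replace (n - 0 - 0)%nat with n by lia.
  rewrite Cplus_comm. f_equal. apply csum_ext. intros. f_equal. lia. Qed.
Lemma cprod_rev f n : cprod f n = cprod (fun i => f (n - 1 - i)%nat) n.
Proof. induction n. auto. change (cprod f (S n)) with (cprod f n * f n).
  replace (S n) with (1 + n)%nat by lia. rewrite cprod_split. simpl.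
  rewrite IHn. rewrite Cmult_1_l. replace (n - 0 - 0)%nat with n by lia.
  rewrite Cmult_comm. f_equal. apply cprod_ext. intros. f_equal. lia. Qed.
Lemma csum_plus f g n : csum (fun k => f k + g k) n = csum f n + csum g n.
Proof. induction n; simpl. ring. rewrite IHn. ring. Qed.
Lemma csum_scal c f n : csum (fun k => c * f k) n = c * csum f n.
Proof. induction n; simpl. ring. rewrite IHn. ring. Qed.
Lemma cprod_mult f g n : cprod (fun k => f k * g k) n = cprod f n * cprod g n.
Proof. induction n; simpl. ring. rewrite IHn. ring. Qed.
Lemma cprod_nz f n : (forall k, f k <> 0) -> cprod f n <> 0.
Proof. induction n; simpl; intros. apply C1_nz. apply Cmult_neq_0; auto. Qed.
Lemma cprod_inv f n : (forall k, f k <> 0) -> cprod (fun k => / f k) n = / cprod f n.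
Proof. intros H. induction n; simpl. { field. } rewrite IHn. field. split; auto. apply cprod_nz; auto. Qed.

Fixpoint rsum (f : nat -> R) (n : nat) : R :=
  match n with O => 0%R | S m => (rsum f m + f m)%R end.
Lemma Cmod_csum f n : (Cmod (csum f n) <= rsum (fun k => Cmod (f k)) n)%R.
Proof. induction n; simpl. rewrite Cmod_0; lra. eapply Rle_trans. apply Cmod_triangle. lra. Qed.
Lemma rsum_le (f g : nat -> R) n : (forall k, (k < n)%nat -> f k <= g k)%R -> (rsum f n <= rsum g n)%R.
Proof. induction n; simpl; intros. lra. assert (f n <= g n)%R by (apply H; lia).
  assert (rsum f n <= rsum g n)%R by (apply IHn; intros; apply H; lia). lra. Qed.
Lemma rsum_geom K r n : (0 <= r < 1)%R -> (rsum (fun k => K * r ^ k) n = K * (1 - r ^ n) / (1 - r))%R.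
Proof. intros. induction n; simpl. field. lra. rewrite IHn. field. lra. Qed.
Lemma rsum_split (f : nat -> R) a b : rsum f (a + b) = (rsum f a + rsum (fun i => f (a + i)%nat) b)%R.
Proof. induction b; simpl. rewrite Nat.add_0_r. ring. rewrite Nat.add_succ_r; simpl. rewrite IHb. ring. Qed.
Lemma rsum_nonneg (f : nat -> R) n : (forall k, 0 <= f k)%R -> (0 <= rsum f n)%R.
Proof. intros H. induction n; simpl. lra. specialize (H n). lra. Qed.

Definition cv (u : nat -> C) (l : C) : Prop :=
  forall eps, (0 < eps)%R -> exists N, forall n, (N <= n)%nat -> (Cmod (u n - l) < eps)%R.

Lemma Cmod_sub_sym a b : Cmod (a - b) = Cmod (b - a).
Proof. replace (a - b) with (- (b - a)) by ring. apply Cmod_opp. Qed.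

Lemma cv_unique u l1 l2 : cv u l1 -> cv u l2 -> l1 = l2.
Proof. intros H1 H2. destruct (Ceq_dec l1 l2) as [|Hn]; auto.
  assert (Hp : (0 < Cmod (l1 - l2))%R). { apply Cmod_gt_0. intro E; apply Hn. 
    replace l1 with ((l1 - l2) + l2) by ring. rewrite E; ring. }

  destruct (H1 (Cmod (l1 - l2) / 2)%R) as [N3 HN3]. lra.
  destruct (H2 (Cmod (l1 - l2) / 2)%R) as [N2 HN2]. lra.
  specialize (HN3 (N3 + N2)%nat ltac:(lia)). specialize (HN2 (N3 + N2)%nat ltac:(lia)).
  assert (Cmod (l1 - l2) <= Cmod (u (N3+N2)%nat - l2) + Cmod (l1 - u (N3+N2)%nat))%R.
  { replace (l1 - l2) with ((u (N3+N2)%nat - l2) + (l1 - u (N3+N2)%nat)) by ring. apply Cmod_triangle. }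
  rewrite Cmod_sub_sym in HN3. lra.
Qed.

Lemma cv_const c : cv (fun _ => c) c.
Proof. intros e He. exists O. intros. replace (c - c) with (RtoC 0) by ring. rewrite Cmod_0. auto. Qed.

Lemma cv_ext u v l : (exists N, forall n, (N <= n)%nat -> u n = v n) -> cv u l -> cv v l.
Proof. intros [N HN] H e He. destruct (H e He) as [M HM]. exists (N + M)%nat. intros.
  rewrite <- HN by lia. apply HM. lia. Qed.

Lemma cv_plus u v a b : cv u a -> cv v b -> cv (fun n => u n + v n) (a + b).
Proof. intros Hu Hv e He. destruct (Hu (e/2)%R) as [N1 H1]. lra. destruct (Hv (e/2)%R) as [N2 H2]. lra.
  exists (N1 + N2)%nat. intros. specialize (H1 n ltac:(lia)). specialize (H2 n ltac:(lia)).
  replace (u n + v n - (a + b)) with ((u n - a) + (v n - b)) by ring.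
  eapply Rle_lt_trans. apply Cmod_triangle. lra. Qed.

Lemma cv_opp u a : cv u a -> cv (fun n => - u n) (- a).
Proof. intros Hu e He. destruct (Hu e He) as [N H]. exists N. intros.
  replace (- u n - - a) with (- (u n - a)) by ring. rewrite Cmod_opp. auto. Qed.

Lemma cv_minus u v a b : cv u a -> cv v b -> cv (fun n => u n - v n) (a - b).
Proof. intros. apply cv_plus; auto. apply cv_opp; auto. Qed.

Lemma cv_bounded u a : cv u a -> exists B, (0 < B)%R /\ forall n, (Cmod (u n) <= B)%R.
Proof. intros H. destruct (H 1%R Rlt_0_1) as [N HN].
  assert (exists B, 0 < B /\ forall n, (n < N)%nat -> Cmod (u n) <= B)%R as [B [HB0 HB]].
  { clear HN. induction N. exists 1%R. split. lra. intros; lia.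
    destruct IHN as [B [HB0 HB]]. exists (B + Cmod (u N))%R. split.
    pose proof (Cmod_ge_0 (u N)). lra. intros. assert (n < N \/ n = N)%nat as [|] by lia.
    pose proof (Cmod_ge_0 (u N)). specialize (HB n H1). lra. subst. pose proof (HB0). lra. }
  exists (B + Cmod a + 1)%R. split. pose proof (Cmod_ge_0 a). lra.
  intros n. pose proof (Cmod_ge_0 a). destruct (Nat.lt_ge_cases n N).
  specialize (HB n H1). lra. specialize (HN n H1).
  replace (u n) with ((u n - a) + a) by ring. eapply Rle_trans. apply Cmod_triangle.
  pose proof (Cmod_ge_0 (u n - a)). lra. Qed.

Lemma cv_mult u v a b : cv u a -> cv v b -> cv (fun n => u n * v n) (a * b).
Proof. intros Hu Hv. destruct (cv_bounded _ _ Hu) as [B [HB0 HB]].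
  intros e He. 
  assert (Hb : (0 < Cmod b + 1)%R) by (pose proof (Cmod_ge_0 b); lra).
  destruct (Hu (e / 2 / (Cmod b + 1))%R) as [N1 H1]. apply Rdiv_lt_0_compat; lra.
  destruct (Hv (e / 2 / B)%R) as [N2 H2]. apply Rdiv_lt_0_compat; lra.
  exists (N1 + N2)%nat. intros. specialize (H1 n ltac:(lia)). specialize (H2 n ltac:(lia)).
  replace (u n * v n - a * b) with (u n * (v n - b) + (u n - a) * b) by ring.
  eapply Rle_lt_trans. apply Cmod_triangle. rewrite !Cmod_mult.
  assert (Cmod (u n) * Cmod (v n - b) <= B * Cmod (v n - b))%R.
  { apply Rmult_le_compat_r. apply Cmod_ge_0. auto. }
  assert (B * Cmod (v n - b) <= e/2)%R.
  { apply Rlt_le in H2. apply Rmult_le_compat_l with (r := B) in H2. 2: lra.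
    replace (B * (e/2/B))%R with (e/2)%R in H2 by (field; lra). auto. }
  assert (Cmod (u n - a) * Cmod b <= Cmod (u n - a) * (Cmod b + 1))%R.
  { apply Rmult_le_compat_l. apply Cmod_ge_0. lra. }
  assert (Cmod (u n - a) * (Cmod b + 1) < e/2)%R.
  { apply Rmult_lt_compat_r with (r := (Cmod b + 1)%R) in H1. 2: lra.
    replace (e / 2 / (Cmod b + 1) * (Cmod b + 1))%R with (e/2)%R in H1 by (field; lra). auto. }
  lra.
Qed.

Lemma cv_scal c u a : cv u a -> cv (fun n => c * u n) (c * a).
Proof. intros. apply cv_mult; auto. apply cv_const. Qed.

Lemma cv_inv u a : cv u a -> a <> 0 -> cv (fun n => / u n) (/ a).
Proof. intros Hu Ha. assert (Hp : (0 < Cmod a)%R) by (apply Cmod_gt_0; auto).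
  destruct (Hu (Cmod a / 2)%R) as [N1 H1]. lra.
  assert (Hlow : forall n, (N1 <= n)%nat -> (Cmod a / 2 <= Cmod (u n))%R).
  { intros n Hn. specialize (H1 n Hn). 
    assert (Cmod a <= Cmod (u n) + Cmod (a - u n))%R.
    { replace a with (u n + (a - u n)) at 1 by ring. apply Cmod_triangle. }
    rewrite Cmod_sub_sym in H1. lra. }
  intros e He. destruct (Hu (e * (Cmod a * Cmod a / 2))%R) as [N2 H2].
  apply Rmult_lt_0_compat. lra. apply Rdiv_lt_0_compat. nra. lra.
  exists (N1 + N2)%nat. intros n Hn. specialize (H2 n ltac:(lia)). specialize (Hlow n ltac:(lia)).
  assert (Hun : u n <> 0). { intro E. rewrite E, Cmod_0 in Hlow. lra. }
  replace (/ u n - / a) with ((a - u n) / (u n * a)) by (field; auto).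
  rewrite Cmod_div. 2: apply Cmult_neq_0; auto. rewrite Cmod_mult. rewrite Cmod_sub_sym.
  apply Rlt_le_trans with ((e * (Cmod a * Cmod a / 2)) / (Cmod (u n) * Cmod a))%R.
  apply Rmult_lt_compat_r. apply Rinv_0_lt_compat. apply Rmult_lt_0_compat; lra. auto.
  apply Rle_trans with ((e * (Cmod a * Cmod a / 2)) / (Cmod a / 2 * Cmod a))%R.
  unfold Rdiv. apply Rmult_le_compat_l. apply Rmult_le_pos. lra. nra.
  apply Rinv_le_contravar. nra. apply Rmult_le_compat_r; lra.
  right. field. lra.
Qed.

Lemma cv_div u v a b : cv u a -> cv v b -> b <> 0 -> cv (fun n => u n / v n) (a / b).
Proof. intros. apply cv_mult; auto. apply cv_inv; auto. Qed.

Lemma cv_subseq u l phi : cv u l -> (forall N, exists M, forall n, (M <= n)%nat -> (N <= phi n)%nat) ->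
  cv (fun n => u (phi n)) l.
Proof. intros H Hp e He. destruct (H e He) as [N HN]. destruct (Hp N) as [M HM].
  exists M. intros. apply HN. apply HM. auto. Qed.

Lemma cv_shift u l k : cv u l -> cv (fun n => u (n + k)%nat) l.
Proof. intros. apply (cv_subseq u l (fun n => (n + k)%nat)); auto. intros N; exists N; intros; lia. Qed.
Lemma cv_double u l : cv u l -> cv (fun n => u (2 * n)%nat) l.
Proof. intros. apply (cv_subseq u l (fun n => (2 * n)%nat)); auto. intros N; exists N; intros; lia. Qed.
Lemma cv_double1 u l : cv u l -> cv (fun n => u (2 * n + 1)%nat) l.
Proof. intros. apply (cv_subseq u l (fun n => (2 * n + 1)%nat)); auto. intros N; exists N; intros; lia. Qed.

Lemma pow_lt_eps r e : (0 <= r < 1)%R -> (0 < e)%R -> exists N, forall n, (N <= n)%nat -> (r ^ n < e)%R.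
Proof. intros Hr He. destruct (pow_lt_1_zero r ltac:(rewrite Rabs_pos_eq; lra) e He) as [N HN].
  exists N. intros. specialize (HN n H). rewrite Rabs_pos_eq in HN. auto. apply pow_le; lra. Qed.

Lemma cv_geom_null (w : nat -> C) K r : (0 <= r < 1)%R -> (forall n, Cmod (w n) <= K * r ^ n)%R -> cv w 0.
Proof. intros Hr H e He. destruct (pow_lt_eps r (e / (Rabs K + 1))%R Hr) as [N HN].
  apply Rdiv_lt_0_compat; auto. pose proof (Rabs_pos K); lra.
  exists N. intros. specialize (HN n H0). replace (w n - 0) with (w n) by ring. eapply Rle_lt_trans. apply H.
  assert (0 <= r ^ n)%R by (apply pow_le; lra).
  apply Rle_lt_trans with ((Rabs K + 1) * r ^ n)%R. pose proof (Rle_abs K). nra.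
  pose proof (Rabs_pos K). 
  apply Rmult_lt_compat_l with (r := (Rabs K + 1)%R) in HN. 2: lra.
  replace ((Rabs K + 1) * (e / (Rabs K + 1)))%R with e in HN by (field; lra). auto.
Qed.

Lemma cauchy_cv (u : nat -> C) :
  (forall eps, (0 < eps)%R -> exists N, forall m n, (N <= m)%nat -> (N <= n)%nat -> (Cmod (u m - u n) < eps)%R) ->
  exists l, cv u l.
Proof. intros H.
  assert (exists y : C_CompleteNormedModule, filterlim u eventually (locally y)) as [y Hy].
  { apply (proj1 (filterlim_locally_cauchy (F := eventually) (U := C_CompleteNormedModule) u)).
    intros eps. destruct (H eps (cond_pos eps)) as [N HN].
    exists (fun n => (N <= n)%nat). split. exists N. auto.
    intros m n Hm Hn. apply (@norm_compat1 C_AbsRing C_NormedModule). 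
    change (Cmod (u n - u m) < eps)%R. apply HN; auto. }
  exists y. intros e He.
  assert (Hf := @norm_factor_gt_0 C_AbsRing C_NormedModule).
  assert (Hpos : (0 < e / @norm_factor C_AbsRing C_NormedModule)%R) by (apply Rdiv_lt_0_compat; auto).
  apply (proj1 (filterlim_locally u y)) with (eps := mkposreal _ Hpos) in Hy.
  destruct Hy as [N HN]. exists N. intros n Hn. specialize (HN n Hn).
  apply (@norm_compat2 C_AbsRing C_NormedModule) in HN. simpl in HN.
  replace (norm_factor * (e / norm_factor))%R with e in HN by (field; lra).
  change (Cmod (u n - y) < e)%R in HN. auto.
Qed.

Definition Lim (u : nat -> C) : C := @lim C_CompleteNormedModule (filtermap u eventually).

Lemma cv_filterlim u l : cv u l -> filterlim u eventually (locally (l : C_CompleteNormedModule)).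
Proof. intros H. apply (proj2 (filterlim_locally u l)). intros eps.
  destruct (H eps (cond_pos eps)) as [N HN]. exists N. intros n Hn. apply (@norm_compat1 C_AbsRing C_NormedModule).
  change (Cmod (u n - l) < eps)%R. auto. Qed.

Lemma cv_Lim u l : cv u l -> Lim u = l.
Proof. intros H. 
  assert (Hc : filterlim u eventually (locally (Lim u : C_CompleteNormedModule))).
  { unfold Lim. intros P [eps HP]. 
    assert (Hcc := @complete_cauchy C_CompleteNormedModule (filtermap u eventually) (filtermap_proper_filter _ C_CompleteNormedModule u _ eventually_filter)).
    assert (cauchy (filtermap u eventually)).
    { intros e. 
      destruct (H e (cond_pos e)) as [N HN].
      exists (l : C_CompleteNormedModule). exists N. intros n Hn. apply (@norm_compat1 C_AbsRing C_NormedModule). 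
      change (Cmod (u n - l) < e)%R. auto. }
    specialize (Hcc H0 eps). eapply filter_imp. 2: exact Hcc. intros x Hx. apply HP. auto. }
  exact (@filterlim_locally_unique nat C_AbsRing C_NormedModule eventually (Proper_StrongProper _ eventually_filter) u (Lim u) l Hc (cv_filterlim u l H)).
Qed.

Lemma tele u n j : u (n + j)%nat - u n = csum (fun i => u (n + i + 1)%nat - u (n + i)%nat) j.
Proof. induction j; simpl. rewrite Nat.add_0_r. ring. rewrite <- IHj.
  replace (n + j + 1)%nat with (n + S j)%nat by lia. ring. Qed.

Lemma cauchy_geom u K r : (0 <= r < 1)%R -> (0 <= K)%R ->
  (forall n, Cmod (u (S n) - u n) <= K * r ^ n)%R -> exists l, cv u l.
Proof. intros Hr HK H. apply cauchy_cv.
  assert (Hb : forall n j, (Cmod (u (n + j)%nat - u n) <= K * r ^ n / (1 - r))%R).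
  { intros n j. rewrite tele. eapply Rle_trans. apply Cmod_csum.
    eapply Rle_trans. apply rsum_le with (g := fun i => ((K * r ^ n) * r ^ i)%R).
    intros. replace (n + k + 1)%nat with (S (n + k)) by lia. eapply Rle_trans. apply H.
    rewrite pow_add. lra. rewrite rsum_geom by auto.
    assert (0 <= r ^ j)%R by (apply pow_le; lra). assert (0 <= r ^ n)%R by (apply pow_le; lra).
    apply Rmult_le_compat_r. apply Rlt_le, Rinv_0_lt_compat; lra.
    assert (0 <= K * r ^ n)%R by (apply Rmult_le_pos; lra). nra. }
  intros e He. destruct (pow_lt_eps r (e * (1 - r) / (2 * (K + 1)))%R Hr) as [N HN].
  apply Rdiv_lt_0_compat. apply Rmult_lt_0_compat; lra. lra.
  exists N. intros m n Hm Hn.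
  assert (HKN : (K * r ^ N / (1 - r) < e / 2)%R).
  { specialize (HN N (le_n N)). 
    apply Rle_lt_trans with ((K + 1) * r ^ N / (1 - r))%R.
    unfold Rdiv. apply Rmult_le_compat_r. apply Rlt_le, Rinv_0_lt_compat; lra.
    assert (0 <= r ^ N)%R by (apply pow_le; lra). nra.
    apply Rmult_lt_compat_l with (r := ((K + 1) / (1 - r))%R) in HN.
    replace ((K + 1) / (1 - r) * (e * (1 - r) / (2 * (K + 1))))%R with (e/2)%R in HN by (field; lra).
    replace ((K + 1) * r ^ N / (1 - r))%R with ((K + 1) / (1 - r) * r ^ N)%R by (field; lra). auto.
    apply Rdiv_lt_0_compat; lra. }
  pose proof (Hb N (m - N)%nat). pose proof (Hb N (n - N)%nat).
  replace (N + (m - N))%nat with m in H0 by lia. replace (N + (n - N))%nat with n in H1 by lia.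
  replace (u m - u n) with ((u m - u N) - (u n - u N)) by ring.
  eapply Rle_lt_trans. replace (u m - u N - (u n - u N)) with ((u m - u N) + - (u n - u N)) by ring.
  apply Cmod_triangle. rewrite Cmod_opp. lra.
Qed.

Lemma exp_le x y : (x <= y)%R -> (exp x <= exp y)%R.
Proof. intros [H|H]. left; apply exp_increasing; auto. subst; lra. Qed.

Lemma prod_bound (c : nat -> C) K r : (0 <= r < 1)%R -> (0 <= K)%R ->
  (forall n, Cmod (c n) <= K * r ^ n)%R -> forall n, (Cmod (cprod (fun k => (1 + c k)%C) n) <= exp (K / (1 - r)))%R.
Proof. intros Hr HK H.
  assert (forall n, Cmod (cprod (fun k => (1 + c k)%C) n) <= exp (rsum (fun k => K * r ^ k) n))%R.
  { induction n; simpl. rewrite Cmod_1, exp_0. lra. rewrite Cmod_mult, exp_plus.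
    apply Rmult_le_compat. apply Cmod_ge_0. apply Cmod_ge_0. auto.
    eapply Rle_trans. apply Cmod_triangle. rewrite Cmod_1.
    eapply Rle_trans. 2: apply exp_ineq1_le. specialize (H n). lra. }
  intros n. eapply Rle_trans. apply H0. rewrite rsum_geom by auto. apply exp_le.
  assert (0 <= r ^ n)%R by (apply pow_le; lra).
  unfold Rdiv. apply Rmult_le_compat_r. apply Rlt_le, Rinv_0_lt_compat; lra. nra.
Qed.

Lemma prod_cv (c : nat -> C) K r : (0 <= r < 1)%R -> (0 <= K)%R ->
  (forall n, Cmod (c n) <= K * r ^ n)%R -> exists l, cv (cprod (fun k => (1 + c k)%C)) l.
Proof. intros Hr HK H. apply cauchy_geom with (K := (exp (K / (1 - r)) * K)%R) (r := r); auto.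
  apply Rmult_le_pos; auto. apply Rlt_le, exp_pos.
  intros n. simpl. replace (cprod (fun k => 1 + c k) n * (1 + c n) - cprod (fun k => 1 + c k) n)
   with (cprod (fun k => 1 + c k) n * c n) by ring. rewrite Cmod_mult. rewrite Rmult_assoc.
  apply Rmult_le_compat. apply Cmod_ge_0. apply Cmod_ge_0. apply prod_bound; auto. auto.
Qed.

Lemma series_cv (c : nat -> C) K r : (0 <= r < 1)%R -> (0 <= K)%R ->
  (forall n, Cmod (c n) <= K * r ^ n)%R -> exists l, cv (csum c) l.
Proof. intros Hr HK H. apply cauchy_geom with (K := K) (r := r); auto.
  intros n. simpl. replace (csum c n + c n - csum c n) with (c n) by ring. auto. Qed.

Definition pp (a b : C) (n : nat) : C := cprod (fun k => 1 + a * b ^ k) n.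

Lemma pp_cv a b : (Cmod a <= 1)%R -> (Cmod b < 1)%R -> cv (pp a b) (Lim (pp a b)).
Proof. intros Ha Hb. destruct (prod_cv (fun k => a * b ^ k) 1 (Cmod b)) as [l Hl].
  split. apply Cmod_ge_0. auto. lra. intros n. rewrite Cmod_mult, Cmod_pow.
  assert (0 <= Cmod b ^ n)%R by (apply pow_le, Cmod_ge_0). nra.
  assert (E: Lim (pp a b) = l) by (apply cv_Lim; exact Hl). rewrite E. exact Hl. Qed.

Lemma pp_S a b n : pp a b (S n) = pp a b n * (1 + a * b ^ n).
Proof. reflexivity. Qed.

Lemma fac_lower a b k : (Cmod a < 1)%R -> (Cmod b < 1)%R -> (1 - Cmod a <= Cmod (1 + a * b ^ k))%R.
Proof. intros Ha Hb. assert (Cmod (a * b ^ k) <= Cmod a)%R.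
  { rewrite Cmod_mult, Cmod_pow. assert (Cmod b ^ k <= 1)%R. apply pow_le1 || idtac.
    destruct k. simpl; lra. apply Rlt_le. apply pow_lt_1_compat. split. apply Cmod_ge_0. auto. lia.
    pose proof (Cmod_ge_0 a). nra. }
  assert (Cmod 1 <= Cmod (1 + a * b ^ k) + Cmod (a * b ^ k))%R.
  { replace (RtoC 1) with ((1 + a * b ^ k) + - (a * b ^ k)) at 1 by ring.
    eapply Rle_trans. apply Cmod_triangle. rewrite Cmod_opp. lra. }
  rewrite Cmod_1 in H0. lra. Qed.

Lemma fac_nz a b k : (Cmod a < 1)%R -> (Cmod b < 1)%R -> 1 + a * b ^ k <> 0.
Proof. intros Ha Hb E. pose proof (fac_lower a b k Ha Hb). rewrite E, Cmod_0 in H. lra. Qed.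

Lemma pp_nz a b n : (Cmod a < 1)%R -> (Cmod b < 1)%R -> pp a b n <> 0.
Proof. intros. apply cprod_nz. intros; apply fac_nz; auto. Qed.

Lemma inv_fac a b k : (Cmod a < 1)%R -> (Cmod b < 1)%R -> 
  / (1 + a * b ^ k) = 1 + (- a / (1 + a * b ^ k)) * b ^ k.
Proof. intros. field. apply fac_nz; auto. Qed.

Lemma inv_fac_bound a b k : (Cmod a < 1)%R -> (Cmod b < 1)%R -> 
  (Cmod ((- a / (1 + a * b ^ k)) * b ^ k) <= (1 / (1 - Cmod a)) * Cmod b ^ k)%R.
Proof. intros Ha Hb. pose proof (fac_lower a b k Ha Hb). rewrite Cmod_mult, Cmod_pow, Cmod_div, Cmod_opp.
  2: apply fac_nz; auto. apply Rmult_le_compat_r. apply pow_le, Cmod_ge_0.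
  unfold Rdiv. rewrite Rmult_1_l. apply Rle_trans with (1 * / Cmod (1 + a * b ^ k))%R.
  apply Rmult_le_compat_r. apply Rlt_le, Rinv_0_lt_compat. lra. lra.
  rewrite Rmult_1_l. apply Rinv_le_contravar; lra. Qed.

Lemma pp_inv_bound a b : (Cmod a < 1)%R -> (Cmod b < 1)%R -> 
  forall n, (Cmod (/ pp a b n) <= exp ((1 / (1 - Cmod a)) / (1 - Cmod b)))%R.
Proof. intros Ha Hb n. unfold pp. rewrite <- cprod_inv by (intros; apply fac_nz; auto).
  rewrite (cprod_ext _ (fun k => 1 + (- a / (1 + a * b ^ k)) * b ^ k)) by (intros; apply inv_fac; auto).
  apply (prod_bound (fun k => (- a / (1 + a * b ^ k)) * b ^ k)). split. apply Cmod_ge_0. auto.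
  pose proof (Cmod_ge_0 a). apply Rlt_le. apply Rdiv_lt_0_compat; lra.
  intros; apply inv_fac_bound; auto. Qed.

Lemma pp_bound a b : (Cmod a <= 1)%R -> (Cmod b < 1)%R -> 
  forall n, (Cmod (pp a b n) <= exp (1 / (1 - Cmod b)))%R.
Proof. intros Ha Hb n. apply (prod_bound (fun k => a * b ^ k)). split. apply Cmod_ge_0. auto. lra.
  intros. rewrite Cmod_mult, Cmod_pow. assert (0 <= Cmod b ^ n0)%R by (apply pow_le, Cmod_ge_0). nra. Qed.

Lemma pp_Lim_nz a b : (Cmod a < 1)%R -> (Cmod b < 1)%R -> Lim (pp a b) <> 0.
Proof. intros Ha Hb. 
  destruct (prod_cv (fun k => (- a / (1 + a * b ^ k)) * b ^ k) (1 / (1 - Cmod a)) (Cmod b)) as [l Hl].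
  split. apply Cmod_ge_0. auto. pose proof (Cmod_ge_0 a). apply Rlt_le. apply Rdiv_lt_0_compat; lra.
  intros; apply inv_fac_bound; auto.
  assert (H1 : cv (fun n => pp a b n * cprod (fun k => 1 + - a / (1 + a * b ^ k) * b ^ k) n) (Lim (pp a b) * l)).
  { apply cv_mult; auto. apply pp_cv; auto. lra. }
  assert (H2 : cv (fun n => pp a b n * cprod (fun k => 1 + - a / (1 + a * b ^ k) * b ^ k) n) 1).
  { eapply cv_ext. 2: apply cv_const. exists O. intros. unfold pp.
    rewrite <- (cprod_ext (fun k => / (1 + a * b ^ k)) (fun k => 1 + - a / (1 + a * b ^ k) * b ^ k)) by (intros; apply inv_fac; auto).
    rewrite cprod_inv by (intros; apply fac_nz; auto). field. apply cprod_nz. intros; apply fac_nz; auto. }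
  pose proof (cv_unique _ _ _ H1 H2). intro E. rewrite E in H. rewrite Cmult_0_l in H. 
  apply C1_nz. auto. Qed.

Definition qf (p : C) (n : nat) : C := pp (- p) p n.
Definition gb (p : C) (N j : nat) : C :=
  if (j <=? N)%nat then qf p N / (qf p j * qf p (N - j)) else 0.

Lemma qf_S p n : qf p (S n) = qf p n * (1 - p * p ^ n).
Proof. unfold qf. rewrite pp_S. ring. Qed.
Lemma qf_0 p : qf p 0 = 1. Proof. reflexivity. Qed.

Section Gauss.
Variable p : C.
Hypothesis Hq : forall n, qf p n <> 0.

Lemma gb_0 N : gb p N 0 = 1.
Proof. unfold gb. simpl. rewrite Nat.sub_0_r, qf_0. field. auto. Qed.
Lemma gb_N N : gb p N N = 1.
Proof. unfold gb. rewrite Nat.leb_refl, Nat.sub_diag, qf_0. field. auto. Qed.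
Lemma gb_gt N j : (N < j)%nat -> gb p N j = 0.
Proof. intros. unfold gb. destruct (Nat.leb_spec j N). lia. auto. Qed.
Lemma gb_sym N j : (j <= N)%nat -> gb p N (N - j) = gb p N j.
Proof. intros. unfold gb. destruct (Nat.leb_spec j N); [|lia]. destruct (Nat.leb_spec (N - j) N); [|lia].
  replace (N - (N - j))%nat with j by lia. field. split; auto. Qed.

Lemma gb_pascal N i : (i <= N)%nat -> gb p (S N) (S i) = gb p N (S i) + p ^ (N - i) * gb p N i.
Proof. intros H. destruct (Nat.eq_dec i N) as [->|Hne].
  rewrite gb_N, gb_N, gb_gt by lia. rewrite Nat.sub_diag. simpl. ring.
  remember (N - S i)%nat as m. replace N with (S i + m)%nat by lia.
  replace (S i + m - i)%nat with (S m) by lia.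
  unfold gb. 
  destruct (Nat.leb_spec (S i) (S (S i + m))); [|lia].
  destruct (Nat.leb_spec (S i) (S i + m)); [|lia].
  destruct (Nat.leb_spec i (S i + m)); [|lia].
  replace (S (S i + m) - S i)%nat with (S m) by lia.
  replace (S i + m - S i)%nat with m by lia.
  replace (S i + m - i)%nat with (S m) by lia.
  rewrite !qf_S. replace (S i + m)%nat with (i + 1 + m)%nat by lia.
  rewrite !Cpow_add_r.
  assert (Hi : 1 - p * p ^ i <> 0). { intro E. apply (Hq (S i)). rewrite qf_S, E. ring. }
  assert (Hm : 1 - p * p ^ m <> 0). { intro E. apply (Hq (S m)). rewrite qf_S, E. ring. }
  simpl. field. repeat split; auto.
Qed.
End Gauss.

Lemma sq_pow x m : (x * x) ^ m = x ^ (2 * m).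
Proof. replace (x * x) with (x ^ 2) by (simpl; ring). rewrite <- Cpow_mult_r. auto. Qed.

Definition xi (x : C) (j : nat) : C := x ^ (j * j).

Lemma rothe_step (x y : C) N (p := x * x) (Hq : forall n, qf p n <> 0) :
  csum (fun j => gb p (S N) j * xi x j * y ^ j) (S (S N)) =
  csum (fun j => gb p N j * xi x j * y ^ j) (S N) * (1 + y * x * p ^ N).
Proof.
  replace (S (S N)) with (1 + S N)%nat by lia. rewrite csum_split. simpl csum at 1.
  rewrite (csum_ext _ (fun i => (gb p N (1 + i) * xi x (1 + i) * y ^ (1 + i)) +
     (p ^ (N - i) * gb p N i * xi x (1 + i) * y ^ (1 + i)))).
  2:{ intros k Hk. simpl. rewrite gb_pascal by (auto; lia). ring. }
  rewrite csum_plus.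
  assert (E1 : gb p (S N) 0 * xi x 0 * y ^ 0 + csum (fun i => gb p N (1 + i) * xi x (1 + i) * y ^ (1 + i)) (S N)
     = csum (fun j => gb p N j * xi x j * y ^ j) (S N)).
  { rewrite gb_0 by auto. 
    transitivity (csum (fun j => gb p N j * xi x j * y ^ j) (1 + S N)).
    rewrite (csum_split _ 1 (S N)). simpl csum at 2. rewrite gb_0 by auto. ring.
    replace (1 + S N)%nat with (S (S N)) by lia. simpl csum at 1. rewrite (gb_gt p N (S N)) by lia. simpl. ring. }
  assert (E2 : csum (fun i => p ^ (N - i) * gb p N i * xi x (1 + i) * y ^ (1 + i)) (S N) =
     csum (fun j => gb p N j * xi x j * y ^ j) (S N) * (y * x * p ^ N)).
  { rewrite Cmult_comm, <- csum_scal. apply csum_ext. intros k Hk.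
    unfold xi, p.
    assert (H1: (x*x)^(N-k) * x^((1+k)*(1+k)) = x * (x*x)^N * x^(k*k)).
    { transitivity (x ^ (2*(N-k) + (1+k)*(1+k))). rewrite Cpow_add_r, sq_pow. auto.
      transitivity (x ^ (S (2*N + k*k))). f_equal; nia. rewrite Cpow_S, Cpow_add_r, sq_pow; ring. }
    transitivity (gb (x * x) N k * y ^ (1 + k) * ((x*x)^(N-k) * x^((1+k)*(1+k)))). ring.
    rewrite H1, (Cpow_add_r y 1 k), Cpow_1_r. generalize ((x*x)^N) (x^(k*k)) (y^k) (gb (x * x) N k). intros. ring. }
  rewrite E2. set (S0 := csum (fun j => gb p N j * xi x j * y ^ j) (S N)) in *.
  replace (S0 * (1 + y * x * p ^ N)) with (S0 + S0 * (y * x * p ^ N)) by ring.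
  rewrite Cplus_assoc. f_equal. rewrite <- E1. f_equal. rewrite Cplus_0_l. reflexivity.
Qed.

Lemma rothe (x y : C) N (Hq : forall n, qf (x * x) n <> 0) :
  pp (y * x) (x * x) N = csum (fun j => gb (x * x) N j * xi x j * y ^ j) (S N).
Proof. induction N. simpl. unfold pp, xi. simpl. rewrite gb_0 by auto. ring.
  rewrite rothe_step by auto. rewrite pp_S, IHN. ring. Qed.

Lemma xw_pow x w A B C D : x * w = 1 -> (A + D = C + B)%nat -> x ^ A * w ^ B = x ^ C * w ^ D.
Proof. intros H E. 
  assert (H1 : forall m, x ^ m * w ^ m = 1). { intros. rewrite <- Cpow_mult_l, H. apply Cpow_1_l. }
  transitivity (x ^ A * w ^ B * (x ^ D * w ^ D)). rewrite H1. ring.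
  transitivity (x ^ C * w ^ D * (x ^ B * w ^ B)). 2: rewrite H1; ring.
  transitivity (x ^ (A + D) * w ^ (B + D)). rewrite !Cpow_add_r. ring.
  rewrite E. rewrite !Cpow_add_r. ring. Qed.

Definition ath (x z : C) (k : nat) : C :=
  match k with O => 1 | S _ => xi x k * (z ^ k + (/ z) ^ k) end.

Lemma cprod_zw z w n : cprod (fun i => z * w ^ (2 * i + 1)) n = z ^ n * w ^ (n * n).
Proof. induction n. simpl. ring. change (cprod (fun i => z * w ^ (2 * i + 1)) (S n)) with (cprod (fun i => z * w ^ (2 * i + 1)) n * (z * w ^ (2 * n + 1))). rewrite IHn.
  replace (S n * S n)%nat with (n * n + (2 * n + 1))%nat by nia. rewrite (Cpow_add_r w (n * n)), (Cpow_S z). ring. Qed.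

Lemma csum_sym3 F n : csum F (S (2 * n)) = csum (fun i => F (n - 1 - i)%nat) n + F n + csum (fun i => F (n + 1 + i)%nat) n.
Proof. replace (S (2 * n)) with (n + (1 + n))%nat by lia. rewrite csum_split, (csum_rev F n).
  rewrite (csum_split (fun i => F (n + i)%nat) 1 n). simpl csum at 2. rewrite Nat.add_0_r.
  rewrite Cplus_0_l, Cplus_assoc. f_equal. apply csum_ext. intros; f_equal; lia. Qed.

Lemma csum_S_l F n : csum F (S n) = F O + csum (fun i => F (S i)) n.
Proof. replace (S n) with (1 + n)%nat by lia. rewrite csum_split. simpl. ring. Qed.

Lemma Cmult_cancel_l (c a b : C) : c <> 0 -> c * a = c * b -> a = b.
Proof. intros H E. replace a with (/ c * (c * a)) by (field; auto). rewrite E. field; auto. Qed.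

Lemma finite_jtp (x z : C) n (Hx : x <> 0) (Hz : z <> 0) (Hq : forall n, qf (x * x) n <> 0) :
  pp (z * x) (x * x) n * pp (x / z) (x * x) n =
  csum (fun k => gb (x * x) (2 * n) (n + k) * ath x z k) (S n).
Proof.
  set (w := / x). assert (Hxw : x * w = 1) by (unfold w; field; auto).
  assert (Hzw : z ^ n * w ^ (n * n) <> 0).
  { assert (Hw : w <> 0) by (intro E; rewrite E in Hxw; apply C1_nz; rewrite <- Hxw; ring).
    apply Cmult_neq_0; apply Cpow_nz; auto. }
  assert (R := rothe x (z * w ^ (2 * n)) (2 * n) Hq).
  assert (L : pp (z * w ^ (2 * n) * x) (x * x) (2 * n) = (z ^ n * w ^ (n * n)) * (pp (z * x) (x * x) n * pp (x / z) (x * x) n)).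
  { unfold pp. replace (cprod (fun k => 1 + z * w ^ (2 * n) * x * (x * x) ^ k) (2 * n)) with (cprod (fun k => 1 + z * w ^ (2 * n) * x * (x * x) ^ k) (n + n)) by (f_equal; lia).
    rewrite cprod_split.
    rewrite cprod_rev. 
    rewrite (cprod_ext (fun i => 1 + z * w ^ (2 * n) * x * (x * x) ^ (n - 1 - i)) (fun i => (z * w ^ (2 * i + 1)) * (1 + x / z * (x * x) ^ i))).
    2:{ intros i Hi. rewrite sq_pow. 
        assert (E : w ^ (2 * n) * x * x ^ (2 * (n - 1 - i)) = w ^ (2 * i + 1)).
        { transitivity (x ^ (1 + 2 * (n - 1 - i)) * w ^ (2 * n)). rewrite Cpow_add_r, Cpow_1_r. ring.
          transitivity (x ^ 0 * w ^ (2 * i + 1)). apply xw_pow; auto. lia. simpl. ring. }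
        transitivity (1 + z * (w ^ (2 * n) * x * x ^ (2 * (n - 1 - i)))). ring. rewrite E.
        rewrite sq_pow.
        transitivity (z * w^(2*i+1) + x ^ (2*i+1) * w^(2*i+1)).
        rewrite (xw_pow x w (2*i+1) (2*i+1) 0 0) by (auto; lia). simpl. ring.
        rewrite (Cpow_add_r x (2*i) 1), Cpow_1_r. field. auto. }
    rewrite cprod_mult, cprod_zw.
    rewrite (cprod_ext (fun i => 1 + z * w ^ (2 * n) * x * (x * x) ^ (n + i)) (fun i => 1 + z * x * (x * x) ^ i)).
    2:{ intros i Hi. rewrite Cpow_add_r, (sq_pow x n). 
        transitivity (1 + z * x * (x * x) ^ i * (x ^ (2 * n) * w ^ (2 * n))). ring.
        rewrite xw_pow with (C := 0%nat) (D := 0%nat) by (auto; lia). simpl. ring. }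
    ring. }
  rewrite L in R. clear L.
  rewrite csum_sym3 in R. rewrite csum_S_l.
  apply (Cmult_cancel_l (z ^ n * w ^ (n * n))); auto. rewrite R. clear R.
  assert (E0 : gb (x * x) (2 * n) n * xi x n * (z * w ^ (2 * n)) ^ n = z ^ n * w ^ (n * n) * (gb (x * x) (2 * n) (n + 0) * ath x z 0)).
  { unfold ath, xi. rewrite Nat.add_0_r, Cpow_mult_l, <- Cpow_mult_r.
    transitivity (gb (x * x) (2 * n) n * z ^ n * (x ^ (n * n) * w ^ (2 * n * n))). ring.
    rewrite xw_pow with (C := 0%nat) (D := (n * n)%nat) by (auto; lia). simpl. ring. }
  rewrite E0. 
  match goal with |- csum ?A n + ?B + csum ?D n = _ => transitivity (B + csum (fun i => A i + D i) n); [rewrite csum_plus; ring|] end.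
  rewrite Cmult_plus_distr_l, <- csum_scal. f_equal.
  apply csum_ext. intros i Hi.
  replace (n + 1 + i)%nat with (n + S i)%nat by lia.
  replace (n - 1 - i)%nat with (n - S i)%nat by lia.
  unfold ath. 
  rewrite <- (gb_sym (x * x) Hq (2 * n) (n + S i)) by lia.
  replace (2 * n - (n + S i))%nat with (n - S i)%nat by lia.
  unfold xi. rewrite !Cpow_mult_l, <- !Cpow_mult_r.
  assert (E1 : x ^ ((n + S i) * (n + S i)) * w ^ (2 * n * (n + S i)) = x ^ (S i * S i) * w ^ (n * n)) by (apply xw_pow; auto; nia).
  assert (E2 : x ^ ((n - S i) * (n - S i)) * w ^ (2 * n * (n - S i)) = x ^ (S i * S i) * w ^ (n * n)).
  { apply xw_pow; auto. 
    replace n with ((n - S i) + S i)%nat at 2 3 4 5 by lia. 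
    generalize (n - S i)%nat. intros m. nia. }
  assert (E3 : z ^ (n - S i) = z ^ n * (/ z) ^ S i).
  { replace n with ((n - S i) + S i)%nat at 2 by lia.
    rewrite Cpow_add_r, Cpow_inv by auto. field. apply Cpow_nz; auto. }
  assert (E4 : z ^ (n + S i) = z ^ n * z ^ S i) by apply Cpow_add_r.
  transitivity (gb (x * x) (2 * n) (n - S i) * (z ^ (n + S i) * (x ^ ((n + S i) * (n + S i)) * w ^ (2 * n * (n + S i)))
     + z ^ (n - S i) * (x ^ ((n - S i) * (n - S i)) * w ^ (2 * n * (n - S i))))). ring.
  rewrite E1, E2, E3, E4. ring.
Qed.

Lemma pow_le1 r k : (0 <= r <= 1)%R -> (r ^ k <= 1)%R.
Proof. intros. rewrite <- (pow1 k). apply pow_incr. lra. Qed.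
Lemma pow_le_dec r m n : (0 <= r <= 1)%R -> (m <= n)%nat -> (r ^ n <= r ^ m)%R.
Proof. intros Hr H. replace n with (m + (n - m))%nat by lia. rewrite pow_add.
  assert (0 <= r ^ m)%R by (apply pow_le; lra). assert (r ^ (n - m) <= 1)%R by (apply pow_le1; auto).
  nra. Qed.

Lemma finite_null (b : nat -> nat -> R) M : (forall n k, 0 <= b n k)%R ->
  (forall k, (k < M)%nat -> forall e, (0 < e)%R -> exists N, forall n, (N <= n)%nat -> (b n k < e)%R) ->
  forall e, (0 < e)%R -> exists N, forall n, (N <= n)%nat -> (rsum (b n) M < e)%R.
Proof. intros Hb. induction M; intros H e He. exists O. intros. simpl. lra.
  destruct (IHM (fun k Hk => H k ltac:(lia)) (e/2)%R) as [N1 H1]. lra.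
  destruct (H M ltac:(lia) (e/2)%R) as [N2 H2]. lra.
  exists (N1 + N2)%nat. intros. simpl. specialize (H1 n ltac:(lia)). specialize (H2 n ltac:(lia)). lra. Qed.

Lemma tannery (h : nat -> nat -> C) (a : nat -> C) G C0 K r :
  (0 <= r < 1)%R -> (0 <= K)%R -> (0 <= C0)%R ->
  (forall n k, (k <= n)%nat -> Cmod (h n k) <= C0)%R ->
  (forall k, cv (fun n => h n k) G) ->
  (forall k, Cmod (a k) <= K * r ^ k)%R ->
  cv (fun n => csum (fun k => h n k * a k) (S n)) (G * Lim (csum a)).
Proof. intros Hr HK HC Hh Hcv Ha.
  destruct (series_cv a K r Hr HK Ha) as [Sl HS]. rewrite (cv_Lim _ _ HS).
  assert (HS1 : cv (fun n => G * csum a (S n)) (G * Sl)).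
  { apply cv_scal. apply (cv_subseq (csum a) Sl (fun n => S n) HS).
    intros N. exists N. intros; lia. }
  assert (H0 : cv (fun n => csum (fun k => (h n k - G) * a k) (S n)) 0).
  { intros e He. set (D := ((C0 + Cmod G) * K)%R).
    assert (HD : (0 <= D)%R) by (unfold D; pose proof (Cmod_ge_0 G); apply Rmult_le_pos; lra).
    destruct (pow_lt_eps r (e * (1 - r) / (2 * (D + 1)))%R Hr) as [M HM].
    apply Rdiv_lt_0_compat. apply Rmult_lt_0_compat; lra. lra.
    assert (HMt : (D * r ^ M / (1 - r) < e / 2)%R).
    { specialize (HM M (le_n M)). assert (0 <= r ^ M)%R by (apply pow_le; lra).
      apply Rle_lt_trans with ((D + 1) * r ^ M / (1 - r))%R.
      unfold Rdiv. apply Rmult_le_compat_r. apply Rlt_le, Rinv_0_lt_compat; lra. nra.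
      apply Rmult_lt_compat_l with (r := ((D + 1) / (1 - r))%R) in HM.
      replace ((D + 1) / (1 - r) * (e * (1 - r) / (2 * (D + 1))))%R with (e/2)%R in HM by (field; lra).
      replace ((D + 1) * r ^ M / (1 - r))%R with ((D + 1) / (1 - r) * r ^ M)%R by (field; lra). auto.
      apply Rdiv_lt_0_compat; lra. }
    destruct (finite_null (fun n k => Cmod (h n k - G) * Cmod (a k))%R M) with (e := (e/2)%R) as [N HN].
    intros. apply Rmult_le_pos; apply Cmod_ge_0.
    { intros k Hk e' He'. destruct (Hcv k (e' / (Cmod (a k) + 1))%R) as [N HN].
      apply Rdiv_lt_0_compat. auto. pose proof (Cmod_ge_0 (a k)); lra.
      exists N. intros n Hn. specialize (HN n Hn). pose proof (Cmod_ge_0 (a k)).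
      apply Rle_lt_trans with (Cmod (h n k - G) * (Cmod (a k) + 1))%R.
      apply Rmult_le_compat_l. apply Cmod_ge_0. lra.
      apply Rmult_lt_compat_r with (r := (Cmod (a k) + 1)%R) in HN. 2: lra.
      replace (e' / (Cmod (a k) + 1) * (Cmod (a k) + 1))%R with e' in HN by (field; lra). auto. }
    lra.
    exists (N + M)%nat. intros n Hn. replace (csum (fun k => (h n k - G) * a k) (S n) - 0) with (csum (fun k => (h n k - G) * a k) (S n)) by ring.
    eapply Rle_lt_trans. apply Cmod_csum.
    replace (S n) with (M + (S n - M))%nat by lia. rewrite rsum_split.
    assert (T1 : (rsum (fun k => Cmod ((h n k - G) * a k)) M < e / 2)%R).
    { specialize (HN n ltac:(lia)). eapply Rle_lt_trans. 2: exact HN. right.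
      clear. induction M; simpl; auto. rewrite IHM, Cmod_mult. auto. }
    assert (T2 : (rsum (fun i => Cmod ((h n (M + i)%nat - G) * a (M + i)%nat)) (S n - M) <= D * r ^ M / (1 - r))%R).
    { eapply Rle_trans. apply rsum_le with (g := fun i => ((D * r ^ M) * r ^ i)%R).
      intros i Hi. rewrite Cmod_mult. unfold D.
      assert (Cmod (h n (M + i)%nat - G) <= C0 + Cmod G)%R.
      { eapply Rle_trans. replace (h n (M + i)%nat - G) with (h n (M + i)%nat + - G) by ring. apply Cmod_triangle.
        rewrite Cmod_opp. specialize (Hh n (M + i)%nat ltac:(lia)). lra. }
      specialize (Ha (M + i)%nat). rewrite pow_add in Ha.
      apply Rle_trans with ((C0 + Cmod G) * Cmod (a (M + i)%nat))%R.
      apply Rmult_le_compat_r. apply Cmod_ge_0. auto. 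
      replace ((C0 + Cmod G) * K * r ^ M * r ^ i)%R with ((C0 + Cmod G) * (K * r ^ M * r ^ i))%R by ring.
      apply Rmult_le_compat_l. pose proof (Cmod_ge_0 G); lra. rewrite Rmult_assoc; exact Ha.
      rewrite rsum_geom by auto. assert (0 <= r ^ (S n - M))%R by (apply pow_le; lra).
      assert (0 <= D * r ^ M)%R by (apply Rmult_le_pos; auto; apply pow_le; lra).
      unfold Rdiv. apply Rmult_le_compat_r. apply Rlt_le, Rinv_0_lt_compat; lra. nra. }
    lra. }
  replace (G * Sl) with (0 + G * Sl) by ring.
  eapply cv_ext. 2: apply (cv_plus _ _ _ _ H0 HS1).
  exists O. intros n _. rewrite <- csum_scal, <- csum_plus. apply csum_ext. intros. ring.
Qed.

Lemma ath_bound (x z : C) k : x <> 0 -> z <> 0 -> (Cmod x < 1)%R -> (Cmod (z * x) <= 1)%R -> (Cmod (x / z) <= 1)%R ->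
  (Cmod (ath x z k) <= (2 / Cmod x) * Cmod x ^ k)%R.
Proof. intros Hx Hz H1 H2 H3. assert (Hp : (0 < Cmod x)%R) by (apply (proj1 (Cmod_gt_0 x)); auto).
  destruct k as [|j]. { simpl. rewrite Cmod_1. 
  replace (2 / Cmod x * 1)%R with (2 * / Cmod x)%R by (field; lra).
  assert (1 < / Cmod x)%R. { rewrite <- Rinv_1. apply Rinv_lt_contravar; lra. } lra. }
  unfold ath, xi. rewrite Cmod_mult. 
  assert (Hb : forall vv : C, (Cmod x * Cmod vv <= 1)%R -> (Cmod (x ^ (S j * S j)) * Cmod (vv ^ S j) <= Cmod x ^ j)%R).
  { intros v Hv. rewrite !Cmod_pow. replace (S j * S j)%nat with (j * S j + S j)%nat by lia.
    rewrite pow_add, Rmult_assoc, <- Rpow_mult_distr.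
    assert (0 <= Cmod x * Cmod v)%R by (apply Rmult_le_pos; apply Cmod_ge_0).
    assert ((Cmod x * Cmod v) ^ S j <= 1)%R by (apply pow_le1; lra).
    assert (Cmod x ^ (j * S j) <= Cmod x ^ j)%R. { apply pow_le_dec. split. lra. lra. nia. }
    assert (0 <= Cmod x ^ (j * S j))%R by (apply pow_le; lra). nra. }
  assert (E1 := Hb z ltac:(rewrite <- Cmod_mult, Cmult_comm; auto)).
  assert (E2 := Hb (/ z) ltac:(rewrite <- Cmod_mult; auto)).
  assert (Cmod (z ^ S j + (/ z) ^ S j) <= Cmod (z ^ S j) + Cmod ((/ z) ^ S j))%R by apply Cmod_triangle.
  assert (0 <= Cmod (x ^ (S j * S j)))%R by apply Cmod_ge_0.
  apply Rle_trans with (2 * Cmod x ^ j)%R. nra.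
  simpl. right. field. lra.
Qed.

Lemma qf_cv p : (Cmod p < 1)%R -> cv (qf p) (Lim (qf p)).
Proof. intros. unfold qf. apply pp_cv; auto. rewrite Cmod_opp; lra. Qed.
Lemma qf_Lim_nz p : (Cmod p < 1)%R -> Lim (qf p) <> 0.
Proof. intros. unfold qf. apply pp_Lim_nz; auto. rewrite Cmod_opp; lra. Qed.
Lemma qf_nz p n : (Cmod p < 1)%R -> qf p n <> 0.
Proof. intros. unfold qf. apply pp_nz; auto. rewrite Cmod_opp; lra. Qed.

Lemma gb_lim p k : (Cmod p < 1)%R -> cv (fun n => gb p (2 * n) (n + k)) (/ Lim (qf p)).
Proof. intros Hp. set (M := Lim (qf p)). assert (HM : M <> 0) by (apply qf_Lim_nz; auto).
  replace (/ M) with (M / (M * M)) by (field; auto).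
  apply cv_ext with (fun n => qf p (2 * n) / (qf p (n + k) * qf p (n - k))).
  exists k. intros n Hn. unfold gb. destruct (Nat.leb_spec (n + k) (2 * n)); [|lia].
  replace (2 * n - (n + k))%nat with (n - k)%nat by lia. auto.
  apply cv_div. apply cv_double, qf_cv; auto.
  apply cv_mult. apply cv_shift, qf_cv; auto.
  apply (cv_subseq (qf p) M (fun n => n - k)%nat). apply qf_cv; auto.
  intros N. exists (N + k)%nat. intros; lia.
  apply Cmult_neq_0; auto.
Qed.

Lemma gb_bound p : (Cmod p < 1)%R -> exists C0, (0 <= C0)%R /\ forall n k, (Cmod (gb p n k) <= C0)%R.
Proof. intros Hp. 
  set (B1 := exp (1 / (1 - Cmod p))). set (B2 := exp ((1 / (1 - Cmod (- p))) / (1 - Cmod p))).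
  assert (H1 : forall n, (Cmod (qf p n) <= B1)%R). { intros. apply pp_bound; auto. rewrite Cmod_opp; lra. }
  assert (H2 : forall n, (Cmod (/ qf p n) <= B2)%R). { intros. apply pp_inv_bound; auto. rewrite Cmod_opp; lra. }
  exists (B1 * B2 * B2)%R. split. unfold B1, B2. pose proof (exp_pos (1 / (1 - Cmod p))).
  pose proof (exp_pos ((1 / (1 - Cmod (- p))) / (1 - Cmod p))). 
  apply Rmult_le_pos. apply Rmult_le_pos; lra. lra.
  intros n k. unfold gb. destruct (k <=? n)%nat.
  replace (qf p n / (qf p k * qf p (n - k))) with (qf p n * / qf p k * / qf p (n - k)) by (field; split; apply qf_nz; auto).
  rewrite !Cmod_mult. 
  apply Rmult_le_compat. apply Rmult_le_pos; apply Cmod_ge_0. apply Cmod_ge_0.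
  apply Rmult_le_compat; try apply Cmod_ge_0; auto. auto.
  rewrite Cmod_0. apply Rmult_le_pos. apply Rmult_le_pos. unfold B1; left; apply exp_pos. unfold B2; left; apply exp_pos. unfold B2; left; apply exp_pos.
Qed.

Definition PL (a b : C) : C := Lim (pp a b).

Lemma jtp (x z : C) : x <> 0 -> z <> 0 -> (Cmod x < 1)%R -> (Cmod (z * x) <= 1)%R -> (Cmod (x / z) <= 1)%R ->
  cv (csum (ath x z)) (PL (- (x * x)) (x * x) * PL (z * x) (x * x) * PL (x / z) (x * x)).
Proof. intros Hx Hz H1 H2 H3. set (p := x * x).
  assert (Hp : (Cmod p < 1)%R). { unfold p. rewrite Cmod_mult. pose proof (Cmod_ge_0 x). nra. }
  assert (Hq : forall n, qf p n <> 0) by (intros; apply qf_nz; auto).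
  assert (Hx0 : (0 < Cmod x)%R) by (apply (proj1 (Cmod_gt_0 x)); auto).
  destruct (gb_bound p Hp) as [C0 [HC0 HC]].
  assert (T := tannery (fun n k => gb p (2 * n) (n + k)) (ath x z) (/ Lim (qf p)) C0 (2 / Cmod x) (Cmod x)
     ltac:(split; [apply Cmod_ge_0 | auto]) ltac:(apply Rlt_le, Rdiv_lt_0_compat; lra) HC0
     ltac:(intros; apply HC) ltac:(intros; apply gb_lim; auto) ltac:(intros; apply ath_bound; auto)).
  assert (F : cv (fun n => csum (fun k => gb p (2 * n) (n + k) * ath x z k) (S n)) (PL (z * x) p * PL (x / z) p)).
  { eapply cv_ext. exists O. intros n _. apply finite_jtp; auto.
    apply cv_mult; apply pp_cv; auto. }
  pose proof (cv_unique _ _ _ T F) as E.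
  destruct (series_cv (ath x z) (2 / Cmod x) (Cmod x)) as [Sl HS].
  split; [apply Cmod_ge_0 | auto]. apply Rlt_le, Rdiv_lt_0_compat; lra. intros; apply ath_bound; auto.
  rewrite (cv_Lim _ _ HS) in E.
  assert (HM : Lim (qf p) <> 0) by (apply qf_Lim_nz; auto).
  replace (PL (- p) p * PL (z * x) p * PL (x / z) p) with Sl. auto.
  unfold PL at 1. change (Lim (pp (- p) p)) with (Lim (qf p)). rewrite <- Cmult_assoc, <- E. field. auto.
Qed.

Lemma PL_cv (a b : C) : (Cmod a <= 1)%R -> (Cmod b < 1)%R -> cv (pp a b) (PL a b).
Proof. intros; apply pp_cv; auto. Qed.

Lemma Cmod_sq_lt (b : C) : (Cmod b < 1)%R -> (Cmod (b * b) < 1)%R.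
Proof. intros. rewrite Cmod_mult. pose proof (Cmod_ge_0 b). nra. Qed.
Lemma Cmod_sq_le (b : C) : (Cmod b <= 1)%R -> (Cmod (b * b) <= 1)%R.
Proof. intros. rewrite Cmod_mult. pose proof (Cmod_ge_0 b). nra. Qed.

Lemma PL_TW (a b : C) : (Cmod a <= 1)%R -> (Cmod b < 1)%R ->
  PL a b * PL (- a) b = PL (- (a * a)) (b * b).
Proof. intros Ha Hb. eapply cv_unique. apply cv_mult; apply PL_cv; auto. rewrite Cmod_opp; auto.
  eapply cv_ext. 2: apply PL_cv. exists O. intros n _. unfold pp. rewrite <- cprod_mult. apply cprod_ext.
  intros. rewrite Cpow_mult_l. ring. rewrite Cmod_opp. apply Cmod_sq_le; auto. apply Cmod_sq_lt; auto. Qed.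

Lemma pp_SPL (a b : C) n : pp a b (2 * n) = pp a (b * b) n * pp (a * b) (b * b) n.
Proof. induction n. simpl. unfold pp; simpl; ring. replace (2 * S n)%nat with (S (S (2 * n))) by lia.
  rewrite !pp_S, IHn. rewrite !Cpow_mult_l. replace (S (2 * n)) with (2 * n + 1)%nat by lia.
  rewrite Cpow_add_r. replace (2 * n)%nat with (n + n)%nat by lia. rewrite Cpow_add_r. ring. Qed.

Lemma PL_SPL (a b : C) : (Cmod a <= 1)%R -> (Cmod b < 1)%R ->
  PL a b = PL a (b * b) * PL (a * b) (b * b).
Proof. intros Ha Hb. eapply cv_unique. apply cv_double. apply PL_cv; auto.
  eapply cv_ext. exists O. intros n _. symmetry. apply pp_SPL.
  apply cv_mult; apply PL_cv; auto; try apply Cmod_sq_lt; auto.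
  rewrite Cmod_mult. pose proof (Cmod_ge_0 a). pose proof (Cmod_ge_0 b). nra. Qed.

Lemma PL_one (b : C) : (Cmod b < 1)%R -> PL 1 b = 2 * PL b b.
Proof. intros Hb. 
  assert (H1 : cv (fun n => pp 1 b (n + 1)) (PL 1 b)). { apply cv_shift, PL_cv; auto. rewrite Cmod_1; lra. }
  assert (H2 : cv (fun n => pp 1 b (n + 1)) (2 * PL b b)).
  { eapply cv_ext. 2: apply cv_scal, PL_cv; auto; lra.
    exists O. intros n _. unfold pp. replace (n + 1)%nat with (1 + n)%nat by lia.
    rewrite cprod_split. rewrite (cprod_ext (fun i => 1 + 1 * b ^ (1 + i)) (fun k => 1 + b * b ^ k)).
    simpl. ring. intros. simpl. ring. }
  exact (cv_unique _ _ _ H1 H2). Qed.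

Definition Mq (x : C) := PL (- (x * x)) (x * x).
Definition Th (x z : C) := Lim (csum (ath x z)).

Lemma Th_cv (x z : C) : x <> 0 -> z <> 0 -> (Cmod x < 1)%R -> (Cmod (z * x) <= 1)%R -> (Cmod (x / z) <= 1)%R ->
  cv (csum (ath x z)) (Th x z).
Proof. intros. unfold Th. rewrite (cv_Lim _ _ (jtp x z H H0 H1 H2 H3)). apply jtp; auto. Qed.

Section Nome.
Variable x : C.
Hypothesis Hx : x <> 0.
Hypothesis Hx1 : (Cmod x < 1)%R.

Lemma Cmod_x_le : (Cmod x <= 1)%R. Proof. lra. Qed.

Lemma th3_prod : Th x 1 = Mq x * PL x (x * x) * PL x (x * x).
Proof. unfold Th. rewrite (cv_Lim _ _ (jtp x 1 Hx C1_nz Hx1 ltac:(rewrite Cmult_1_l; lra) ltac:(replace (x / 1) with x by (field; apply C1_nz); lra))).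
  replace (1 * x) with x by ring. replace (x / 1) with x by (field; apply C1_nz). reflexivity. Qed.

Lemma Cm1_nz : (- (1) : C) <> 0.
Proof. intro E. apply C1_nz. replace (RtoC 1) with (- - (1) : C) by ring. rewrite E. ring. Qed.

Lemma th4_prod : Th x (- (1)) = Mq x * PL (- x) (x * x) * PL (- x) (x * x).
Proof. unfold Th. rewrite (cv_Lim _ _ (jtp x (- (1)) Hx Cm1_nz Hx1 ltac:(replace (- (1) * x) with (- x) by ring; rewrite Cmod_opp; lra) ltac:(replace (x / - (1)) with (- x) by (field; apply C1_nz); rewrite Cmod_opp; lra))).
  replace (- (1) * x) with (- x) by ring. replace (x / - (1)) with (- x) by (field; apply C1_nz). reflexivity. Qed.

Lemma th2_prod : Th x x = 2 * Mq x * PL (x * x) (x * x) * PL (x * x) (x * x).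
Proof. unfold Th. rewrite (cv_Lim _ _ (jtp x x Hx Hx Hx1 ltac:(apply Cmod_sq_le; lra) ltac:(replace (x / x) with (RtoC 1) by (field; auto); rewrite Cmod_1; lra))).
  replace (x / x) with (RtoC 1) by (field; auto). rewrite PL_one by (apply Cmod_sq_lt; auto).
  unfold Mq. ring. Qed.
End Nome.

Lemma ath_S (x z : C) m : ath x z (S m) = x ^ (S m * S m) * (z ^ S m + (/ z) ^ S m).
Proof. reflexivity. Qed.

Lemma parity_sum (x z : C) n : x <> 0 -> z * z = 1 ->
  csum (ath x z) (S (2 * n)) = csum (ath (x ^ 4) 1) (S n) + z * x * csum (ath (x ^ 4) (x ^ 4)) (S n)
     - z * x ^ ((2 * n + 1) * (2 * n + 1)).
Proof. intros Hx Hz.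
  assert (Hz0 : z <> 0). { intro E. rewrite E in Hz. apply C1_nz. rewrite <- Hz. ring. }
  assert (Hiz : / z = z). { replace (/ z) with (/ z * (z * z)) by (rewrite Hz; ring). field. auto. }
  assert (Hpz : forall m, z ^ (2 * m) = 1). { intros. rewrite Cpow_mult_r. simpl. rewrite Cmult_1_r, Hz. apply Cpow_1_l. }
  assert (Hy : forall m, (x ^ 4) ^ m = x ^ (4 * m)). { intros. rewrite Cpow_mult_r. auto. }
  assert (Hiy : forall m, (/ x ^ 4) ^ m = (/ x) ^ (4 * m)). { intros. rewrite <- Cpow_inv by auto. rewrite Cpow_mult_r. auto. }
  assert (Hxw : x * / x = 1) by (field; auto).
  induction n.
  - simpl. unfold ath. simpl. ring.
  - replace (S (2 * S n)) with (S (S (S (2 * n)))) by lia.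
    change (csum (ath x z) (S (S (S (2 * n))))) with (csum (ath x z) (S (2 * n)) + ath x z (S (2 * n)) + ath x z (S (S (2 * n)))).
    change (csum (ath (x ^ 4) 1) (S (S n))) with (csum (ath (x ^ 4) 1) (S n) + ath (x ^ 4) 1 (S n)).
    change (csum (ath (x ^ 4) (x ^ 4)) (S (S n))) with (csum (ath (x ^ 4) (x ^ 4)) (S n) + ath (x ^ 4) (x ^ 4) (S n)).
    rewrite IHn. rewrite !ath_S. rewrite Hiz.
    replace (z ^ S (2 * n) + z ^ S (2 * n)) with (2 * z) by (rewrite Cpow_S, Hpz; ring).
    replace (z ^ S (S (2 * n)) + z ^ S (S (2 * n))) with (RtoC 2) by (replace (S (S (2 * n))) with (2 * S n)%nat by lia; rewrite Hpz; ring).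
    replace (/ 1) with (RtoC 1) by (field; apply C1_nz). rewrite !Hy, Hiy, !Cpow_1_l.
    assert (E1 : x * (x ^ (4 * (S n * S n)) * x ^ (4 * S n)) = x ^ ((2 * S n + 1) * (2 * S n + 1))).
    { rewrite <- Cpow_add_r. rewrite <- (Cpow_1_r x) at 1. rewrite <- Cpow_add_r. f_equal. nia. }
    assert (E2 : x * (x ^ (4 * (S n * S n)) * (/ x) ^ (4 * S n)) = x ^ ((2 * n + 1) * (2 * n + 1))).
    { transitivity (x ^ (1 + 4 * (S n * S n)) * (/ x) ^ (4 * S n)). rewrite Cpow_add_r, Cpow_1_r. ring.
      rewrite (xw_pow x (/ x) _ _ ((2 * n + 1) * (2 * n + 1)) 0) by (auto; nia). simpl. ring. }
    assert (E3 : x ^ (4 * (S n * S n)) = x ^ (S (2 * n + 1) * S (2 * n + 1))) by (f_equal; nia).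
    assert (E4 : S (2 * n) = (2 * n + 1)%nat) by lia. rewrite E4.
    transitivity (csum (ath (x ^ 4) 1) (S n) + z * x * csum (ath (x ^ 4) (x ^ 4)) (S n) +
      x ^ (4 * (S n * S n)) * 2 + z * (x * (x ^ (4 * (S n * S n)) * x ^ (4 * S n))) + 
      z * (x * (x ^ (4 * (S n * S n)) * (/ x) ^ (4 * S n))) - z * x ^ ((2 * S n + 1) * (2 * S n + 1))).
    2: ring.
    rewrite E1, E2, E3. ring.
Qed.

Lemma Cmod_div1 (x : C) : x / 1 = x.
Proof. unfold Cdiv. replace (/ 1) with (RtoC 1). ring. field. Qed.

Lemma parity_lim (x z : C) : x <> 0 -> (Cmod x < 1)%R -> Cmod z = 1%R -> z * z = 1 ->
  Th x z = Th (x ^ 4) 1 + z * x * Th (x ^ 4) (x ^ 4).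
Proof. intros Hx Hx1 Hzm Hz.
  assert (Hz0 : z <> 0). { intro E. rewrite E, Cmod_0 in Hzm. lra. }
  assert (Hy0 : x ^ 4 <> 0) by (apply Cpow_nz; auto).
  assert (Hy1 : (Cmod (x ^ 4) < 1)%R). { rewrite Cmod_pow. apply pow_lt_1_compat. split. apply Cmod_ge_0. auto. lia. }
  assert (C1 : cv (csum (ath x z)) (Th x z)).
  { apply Th_cv; auto. rewrite Cmod_mult, Hzm. lra. rewrite Cmod_div, Hzm by auto. lra. }
  assert (C2 : cv (csum (ath (x ^ 4) 1)) (Th (x ^ 4) 1)).
  { apply Th_cv; auto. apply C1_nz. rewrite Cmult_1_l. lra. rewrite Cmod_div1. lra. }
  assert (C3 : cv (csum (ath (x ^ 4) (x ^ 4))) (Th (x ^ 4) (x ^ 4))).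
  { apply Th_cv; auto. apply Cmod_sq_le. lra. replace (x ^ 4 / x ^ 4) with (RtoC 1) by (field; auto). rewrite Cmod_1. lra. }
  assert (C4 : cv (fun n => z * x ^ ((2 * n + 1) * (2 * n + 1))) 0).
  { apply (cv_geom_null _ 1 (Cmod x)). split. apply Cmod_ge_0. auto.
    intros n. rewrite Cmod_mult, Hzm, Cmod_pow. rewrite !Rmult_1_l. apply pow_le_dec. split. apply Cmod_ge_0. lra. nia. }
  eapply cv_unique. apply (cv_subseq _ _ (fun n => S (2 * n)) C1). intros N. exists N. intros; lia.
  replace (Th (x ^ 4) 1 + z * x * Th (x ^ 4) (x ^ 4)) with (Th (x ^ 4) 1 + z * x * Th (x ^ 4) (x ^ 4) - 0) by ring.
  eapply cv_ext. exists O. intros n _. symmetry. apply parity_sum; auto.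
  apply cv_minus; auto. apply cv_plus. apply (cv_subseq _ _ S C2). intros N. exists N. intros; lia.
  apply cv_scal. apply (cv_subseq _ _ S C3). intros N. exists N. intros; lia.
Qed.

Section Nome2.
Variable x : C.
Hypothesis Hx : x <> 0.
Hypothesis Hx1 : (Cmod x < 1)%R.

Let Hxx : x * x <> 0. Proof. apply Cmult_neq_0; auto. Qed.
Let Hxx1 : (Cmod (x * x) < 1)%R. Proof. apply Cmod_sq_lt; auto. Qed.
Let Hx4 : (Cmod (x * x * (x * x)) < 1)%R. Proof. apply Cmod_sq_lt; auto. Qed.

Lemma ii_rel : Th x x * Th x x = 2 * Th (x * x) (x * x) * Th (x * x) 1.
Proof. rewrite (th2_prod x Hx Hx1), (th2_prod (x * x) Hxx Hxx1), (th3_prod (x * x) Hxx Hxx1).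
  assert (E1 : Mq x * PL (x * x) (x * x) = Mq (x * x)).
  { unfold Mq. rewrite Cmult_comm. apply PL_TW; lra. }
  assert (E2 : PL (x * x) (x * x) = PL (x * x) (x * x * (x * x)) * PL (x * x * (x * x)) (x * x * (x * x))).
  { apply PL_SPL; lra. }
  transitivity (4 * (Mq x * PL (x * x) (x * x)) * (Mq x * PL (x * x) (x * x)) * PL (x * x) (x * x) * PL (x * x) (x * x)). ring.
  rewrite E1. rewrite E2. ring. Qed.

Lemma P1_rel : Th x 1 * Th x (- (1)) = Th (x * x) (- (1)) * Th (x * x) (- (1)).
Proof. rewrite (th3_prod x Hx Hx1), (th4_prod x Hx Hx1), (th4_prod (x * x) Hxx Hxx1).
  assert (E1 : PL x (x * x) * PL (- x) (x * x) = PL (- (x * x)) (x * x * (x * x))).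
  { apply PL_TW; lra. }
  assert (E2 : Mq x = PL (- (x * x)) (x * x * (x * x)) * Mq (x * x)).
  { unfold Mq. rewrite PL_SPL. f_equal. f_equal. ring. rewrite Cmod_opp; lra. lra. }
  transitivity (Mq x * Mq x * (PL x (x * x) * PL (- x) (x * x)) * (PL x (x * x) * PL (- x) (x * x))). ring.
  rewrite E1, E2. ring. Qed.

Lemma th3_nz : Th x 1 <> 0.
Proof. rewrite (th3_prod x Hx Hx1). unfold Mq, PL.
  assert (Lim (pp (- (x * x)) (x * x)) <> 0) by (apply pp_Lim_nz; auto; rewrite Cmod_opp; auto).
  assert (Lim (pp x (x * x)) <> 0) by (apply pp_Lim_nz; auto).
  repeat apply Cmult_neq_0; auto. Qed.

Lemma ratio2 : PL (x * x) (x * x) / PL x (x * x) * (PL (x * x) (x * x) / PL x (x * x)) = Th x x / (2 * Th x 1).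
Proof. rewrite (th2_prod x Hx Hx1), (th3_prod x Hx Hx1). unfold Mq, PL.
  assert (Lim (pp (- (x * x)) (x * x)) <> 0) by (apply pp_Lim_nz; auto; rewrite Cmod_opp; auto).
  assert (Lim (pp x (x * x)) <> 0) by (apply pp_Lim_nz; auto).
  field. auto. Qed.
End Nome2.

Lemma alg (t a b c d e f u2 u3 v2 v3 : C) :
  a = u3 + t * u2 -> b = u3 - t * u2 -> c = v3 + t * t * v2 -> d = v3 - t * t * v2 ->
  e * e = 2 * f * c -> f * f = 2 * u2 * u3 -> u2 * u2 = 2 * v2 * v3 -> a * b = d * d -> a <> 0 -> c <> 0 ->
  (e / (2 * a)) * (e / (2 * a)) * (1 + 4 * t * ((f / (2 * c)) * (f / (2 * c)))) = f / (2 * c).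
Proof. intros Ha Hb Hc Hd He Hf Hu Hab Ha0 Hc0.
  assert (Ec : c * c = u3 * u3 + t * t * u2 * u2).
  { transitivity (d * d + (c * c - d * d)). ring.
    assert (c * c - d * d = 2 * (t * t) * (2 * v2 * v3)) by (rewrite Hc, Hd; ring).
    rewrite H, <- Hu, <- Hab, Ha, Hb. ring. }
  assert (I : a * a = c * c + t * (f * f)).
  { rewrite Ec, Hf, Ha. ring. }
  transitivity (e * e * (c * c + t * (f * f)) / (4 * (a * a) * (c * c))). field. auto.
  rewrite <- I. rewrite He. field. auto.
Qed.

Lemma cexp_add a b : cexp (a + b) = cexp a * cexp b.
Proof. destruct a as [a1 a2], b as [b1 b2]. unfold cexp, Cmult, Cplus, Re, Im; simpl.
  rewrite exp_plus, cos_plus, sin_plus. f_equal; ring. Qed.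

Lemma Cmod_cexp z : Cmod (cexp z) = exp (Re z).
Proof. destruct z as [a b]. unfold cexp, Cmod, Re, Im; cbn [fst snd].
  replace ((exp a * cos b) ^ 2 + (exp a * sin b) ^ 2)%R with (exp a * exp a)%R.
  apply sqrt_square. left; apply exp_pos.
  transitivity (exp a * exp a * (Rsqr (sin b) + Rsqr (cos b)))%R. rewrite sin2_cos2. ring. unfold Rsqr. ring. Qed.

Lemma qpow_add r1 r2 tau : qpow (r1 + r2) tau = qpow r1 tau * qpow r2 tau.
Proof. unfold qpow. rewrite <- cexp_add. f_equal. 
  replace (2 * PI * (r1 + r2))%R with (2 * PI * r1 + 2 * PI * r2)%R by ring. rewrite RtoC_plus. ring. Qed.

Lemma qpow_0 tau : qpow 0 tau = 1.
Proof. unfold qpow. replace (2 * PI * 0)%R with 0%R by ring.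
  rewrite Cmult_0_l. unfold cexp. simpl.
  rewrite exp_0, cos_0, sin_0. apply injective_projections; simpl; ring. Qed.

Lemma qpow_nat k r tau : qpow (INR k * r) tau = (qpow r tau) ^ k.
Proof. induction k. simpl. rewrite Rmult_0_l. apply qpow_0.
  rewrite S_INR. replace ((INR k + 1) * r)%R with (INR k * r + r)%R by ring.
  rewrite qpow_add, IHk. simpl. ring. Qed.

Lemma qpow_2tau r tau : qpow r (2 * tau) = qpow (2 * r) tau.
Proof. unfold qpow. f_equal. rewrite !RtoC_mult. ring. Qed.

Lemma Cmod_qpow r tau : Cmod (qpow r tau) = exp (- (2 * PI * r * Im tau)).
Proof. unfold qpow. rewrite Cmod_cexp. f_equal. destruct tau as [a b]. unfold Re, Im, Ci, Cmult, RtoC; simpl. ring. Qed.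

Lemma qpow_small r tau : (0 < r)%R -> (0 < Im tau)%R -> (Cmod (qpow r tau) < 1)%R /\ qpow r tau <> 0.
Proof. intros Hr Ht. rewrite Cmod_qpow. split. rewrite <- exp_0. apply exp_increasing.
  assert (0 < 2 * PI * r * Im tau)%R. { pose proof PI_RGT_0. assert (0 < 2 * PI)%R by lra. assert (0 < 2 * PI * r)%R by (apply Rmult_lt_0_compat; lra). apply Rmult_lt_0_compat; lra. } lra.
  intro E. assert (H := Cmod_qpow r tau). rewrite E, Cmod_0 in H. pose proof (exp_pos (- (2 * PI * r * Im tau))). lra. Qed.

Section Main.
Variable tau : C.
Hypothesis Htau : (0 < Im tau)%R.
Let t := qpow (1/4) tau.
Let Ht : (Cmod t < 1)%R /\ t <> 0. Proof. apply qpow_small; auto. lra. Qed.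

Lemma qpow_quarter k : qpow (INR k * (1/4)) tau = t ^ k.
Proof. apply qpow_nat. Qed.

Lemma pfactor_eq n : pfactor tau (S n) =
  ((1 + t * t * (t * t) ^ n) / (1 + t * (t * t) ^ n)) * ((1 + t * t * (t * t) ^ n) / (1 + t * (t * t) ^ n)).
Proof. unfold pfactor.
  replace (INR (S n) / 2 - 1/4)%R with (INR (S (2 * n)) * (1/4))%R.
  replace (INR (S n) / 2)%R with (INR (S (S (2 * n))) * (1/4))%R.
  rewrite !qpow_quarter. rewrite sq_pow. simpl Cpow. rewrite !Cmult_assoc. reflexivity.
  rewrite !S_INR, mult_INR. simpl. field.
  rewrite !S_INR, mult_INR. simpl. field. Qed.

Lemma ppartial_eq N : ppartial tau N = (pp (t * t) (t * t) N / pp t (t * t) N) * (pp (t * t) (t * t) N / pp t (t * t) N).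
Proof. destruct Ht as [Ht1 Ht0]. assert (Htt : (Cmod (t * t) < 1)%R) by (apply Cmod_sq_lt; auto).
  induction N. { simpl. unfold pp. simpl. field. }
  simpl ppartial. rewrite IHN, pfactor_eq, !pp_S.
  assert (pp t (t * t) N <> 0) by (apply pp_nz; auto).
  assert (1 + t * (t * t) ^ N <> 0) by (apply fac_nz; auto).
  field. auto. Qed.

Lemma ppartial_cv : cv (ppartial tau) ((PL (t * t) (t * t) / PL t (t * t)) * (PL (t * t) (t * t) / PL t (t * t))).
Proof. destruct Ht as [Ht1 Ht0]. assert (Htt : (Cmod (t * t) < 1)%R) by (apply Cmod_sq_lt; auto).
  eapply cv_ext. exists O. intros n _. symmetry. apply ppartial_eq.
  assert (PL t (t * t) <> 0) by (apply pp_Lim_nz; auto).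
  apply cv_mult; apply cv_div; auto; apply PL_cv; lra. Qed.

Lemma pprod_eq : pprod tau = (PL (t * t) (t * t) / PL t (t * t)) * (PL (t * t) (t * t) / PL t (t * t)).
Proof. apply (cv_Lim (ppartial tau)). apply ppartial_cv. Qed.

Lemma pprod_lim : filterlim (ppartial tau) eventually (locally (pprod tau)).
Proof. rewrite pprod_eq. apply cv_filterlim. apply ppartial_cv. Qed.
End Main.

Theorem proposition6 (tau : C) (Htau : 0 < Im tau) :
  filterlim (ppartial tau) eventually (locally (pprod tau)) /\
  filterlim (ppartial (Cmult 2 tau)) eventually (locally (pprod (Cmult 2 tau))) /\
  Cminus
    (Cplus (Cmult (Cmult (pfrak tau) (pfrak tau))
                  (Cmult (pfrak (Cmult 2 tau)) (pfrak (Cmult 2 tau))))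
           (Cmult (pfrak tau) (pfrak tau)))
    (Cmult 2 (pfrak (Cmult 2 tau))) = 0.
Proof.
  assert (Htau2 : (0 < Im (2 * tau))%R). { destruct tau as [a b]. unfold Im, Cmult, RtoC in *; simpl in *. lra. }
  split. apply pprod_lim; auto. split. apply pprod_lim; auto.
  set (s := qpow (1/16) tau). set (t := qpow (1/4) tau).
  assert (Hst : t = s * s * (s * s)). { unfold t, s. replace (1/4)%R with (INR 4 * (1/16))%R by (simpl; field). rewrite qpow_nat. simpl. ring. }
  assert (Hs2 : qpow (1/16) (2 * tau) = s * s). { rewrite qpow_2tau. replace (2 * (1/16))%R with (INR 2 * (1/16))%R by (simpl; field). rewrite qpow_nat. fold s. simpl. ring. }
  assert (Ht2 : qpow (1/4) (2 * tau) = t * t). { rewrite qpow_2tau. replace (2 * (1/4))%R with (INR 2 * (1/4))%R by (simpl; field). rewrite qpow_nat. fold t. simpl. ring. }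
  unfold pfrak. rewrite Hs2. fold s.
  rewrite (pprod_eq tau Htau), (pprod_eq (2 * tau) Htau2). rewrite Ht2. fold t.
  destruct (qpow_small (1/4) tau ltac:(lra) Htau) as [Ht1 Ht0]. fold t in Ht1, Ht0.
  assert (Htt0 : t * t <> 0) by (apply Cmult_neq_0; auto).
  assert (Htt1 : (Cmod (t * t) < 1)%R) by (apply Cmod_sq_lt; auto).
  rewrite (ratio2 t Ht0 Ht1), (ratio2 (t * t) Htt0 Htt1).
  set (PA := Th t t / (2 * Th t 1)). set (PB := Th (t * t) (t * t) / (2 * Th (t * t) 1)).
  assert (Key : PA * PA * (1 + 4 * t * (PB * PB)) = PB).
  { unfold PA, PB. 
    assert (Ht4 : t ^ 4 <> 0) by (apply Cpow_nz; auto).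
    assert (Ht41 : (Cmod (t ^ 4) < 1)%R). { rewrite Cmod_pow. apply pow_lt_1_compat. split. apply Cmod_ge_0. auto. lia. }
    assert (R1 := parity_lim t 1 Ht0 Ht1 Cmod_1 ltac:(ring)).
    assert (R2 := parity_lim t (- (1)) Ht0 Ht1 Cmod_m1 ltac:(ring)).
    assert (R3 := parity_lim (t * t) 1 Htt0 Htt1 Cmod_1 ltac:(ring)).
    assert (R4 := parity_lim (t * t) (- (1)) Htt0 Htt1 Cmod_m1 ltac:(ring)).
    assert (I1 := ii_rel t Ht0 Ht1).
    assert (I2 := ii_rel (t * t) Htt0 Htt1). replace (t * t * (t * t)) with (t ^ 4) in I2 by ring.
    assert (I3 := ii_rel (t ^ 4) Ht4 Ht41). replace (t ^ 4 * t ^ 4) with ((t * t) ^ 4) in I3 by ring.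
    assert (P := P1_rel t Ht0 Ht1).
    apply (alg t (Th t 1) (Th t (- (1))) (Th (t * t) 1) (Th (t * t) (- (1))) (Th t t) (Th (t * t) (t * t))
      (Th (t ^ 4) (t ^ 4)) (Th (t ^ 4) 1) (Th ((t * t) ^ 4) ((t * t) ^ 4)) (Th ((t * t) ^ 4) 1)).
    rewrite R1; ring. rewrite R2; ring. rewrite R3; ring. rewrite R4; ring.
    rewrite I1; ring. rewrite I2; ring. rewrite I3; ring. auto.
    apply th3_nz; auto. apply th3_nz; auto. }
  transitivity (4 * (s * s) * (PA * PA * (1 + 4 * t * (PB * PB)) - PB)).
  rewrite Hst. ring. rewrite Key. ring.
Qed.
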